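(* Let $\mu>0$ and $\lambda_1>0$, and consider the system $$\frac{dx}{dt}=\lambda_1\bigl(2\mu y-4\mu xy-2x^2-2xy+x\bigr),\qquad \frac{dy}{dt}=\lambda_1\bigl(\mu y-4\mu y^2-2xy-2y^2+y\bigr).$$ Let $Q\subset\mathbb{R}^2$ be the closed quadrangle defined by $y\ge x/2$, $y\ge 1/2-x$, $y\le 1/3$, $y\le 1/2-x/2$. Then the fixed points of this system in $Q$ are given by $$x_c=\frac{2\mu+2}{4\mu+6}=\frac{\mu+1}{2\mu+3},\qquad y_c=\frac{\mu+1}{4\mu+6}.$$
   Context: $Q$ is the domain of convex mosaics in the inverse symbolic plane, with vertices $(1/3,1/6)$, $(1/2,1/4)$, $(1/3,1/3)$, $(1/6,1/3)$. *)

(* Defs.v *)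
From Stdlib Require Import Reals Lra.
Open Scope R_scope.

Definition field_x (mu lam1 x y : R) : R :=
  lam1 * (2 * mu * y - 4 * mu * x * y - 2 * x ^ 2 - 2 * x * y + x).
Definition field_y (mu lam1 x y : R) : R :=
  lam1 * (mu * y - 4 * mu * y ^ 2 - 2 * x * y - 2 * y ^ 2 + y).

Definition in_Q (x y : R) : Prop :=
  y >= x / 2 /\ y >= 1 / 2 - x /\ y <= 1 / 3 /\ y <= 1 / 2 - x / 2.

Definition is_fixed_point (mu lam1 x y : R) : Prop :=
  field_x mu lam1 x y = 0 /\ field_y mu lam1 x y = 0.

(* Main.v *)
Require Import Defs.
From Stdlib Require Import Reals Lra.
Open Scope R_scope.

Theorem lemma5 (mu lam1 : R) (hmu : 0 < mu) (hlam : 0 < lam1) :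
  forall x y : R, in_Q x y ->
    (is_fixed_point mu lam1 x y <->
     (x = (2 * mu + 2) / (4 * mu + 6) /\ y = (mu + 1) / (4 * mu + 6))).
Proof.
  intros x y [h1 [h2 [h3 h4]]].
  unfold is_fixed_point, field_x, field_y.
  assert (hy : 0 < y) by lra.
  assert (hd : 4 * mu + 6 <> 0) by lra.
  split.
  - intros [F G].
    apply Rmult_integral in F. destruct F as [F|F]; [lra|].
    apply Rmult_integral in G. destruct G as [G|G]; [lra|].
    set (L := mu - 4 * mu * y - 2 * x - 2 * y + 1).
    assert (HL : y * L = 0) by (unfold L; rewrite <- G; ring).
    apply Rmult_integral in HL. destruct HL as [HL|HL]; [lra|].
    assert (E : mu * (2 * y - x) = 0).
    { replace (mu * (2 * y - x)) with
        ((2 * mu * y - 4 * mu * x * y - 2 * x ^ 2 - 2 * x * y + x) - x * L)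
        by (unfold L; ring).
      rewrite F, HL; ring. }
    apply Rmult_integral in E. destruct E as [E|E]; [lra|].
    assert (hx : x = 2 * y) by lra.
    subst x. unfold L in HL.
    assert (hyv : y = (mu + 1) / (4 * mu + 6)).
    { apply (Rmult_eq_reg_r (4 * mu + 6)); [|exact hd].
      field_simplify; [lra|exact hd]. }
    split; [rewrite hyv; field; exact hd | exact hyv].
  - intros [-> ->]. split; field; exact hd.
Qed.
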